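(* Let $X$ be a set, $\mathcal{F}\subseteq\mathcal{P}(X)$ a field, $\mathcal{E}\subseteq\mathcal{F}$ an arbitrary subset, and $(\mu^+,\mu^-)$ a conjugate pair of set functions on $\mathcal{F}$ such that $\mu^+(A)=\mu^-(A)$ for all $A\in\mathcal{E}$. Then $(\mathcal{E}, d_{\mu^+})$ is complete if and only if: for every sequence $(A_i)_{i\in\mathbb{N}}$ in $\mathcal{E}$ such that the nets $\{\mu^+(\bigcap_{k=i}^j A_k): i\le j\}$ and $\{\mu^-(\bigcap_{k=i}^j A_k): i\le j\}$ converge to a common limit $L$, the net $\{\bigcap_{k=i}^j A_k: i\le j\}$ converges in $d_{\mu^+}$ to some $A\in\mathcal{E}$ with $\mu^+(A)=L$.
   Context: A field is a family of subsets of $X$ containing $\emptyset$ and closed under complements and finite unions. $I_A$ denotes the indicator function of $A$. Consider $\mu^+,\mu^-:\mathcal{F}\to[0,1]$ with $\mu^\pm(\emptyset)=0$ and $\mu^\pm(X)=1$. $\mu^+$ is subadditive if $I_A\le I_B+I_C\implies \mu^+(A)\le\mu^+(B)+\mu^+(C)$; $\mu^-$ is superadditive if $I_A\ge I_B+I_C\implies\mu^-(A)\ge\mu^-(B)+\mu^-(C)$; $\mu^-$ is co-subadditive with respect to $\mu^+$ if $I_A\le I_B+I_C\implies\mu^-(A)\le\mu^-(B)+\mu^+(C)$; $\mu^+$ is co-superadditive with respect to $\mu^-$ if $I_A\ge I_B+I_C\implies\mu^+(A)\ge\mu^+(B)+\mu^-(C)$ (all for $A,B,C\in\mathcal{F}$).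 The pair $(\mu^+,\mu^-)$ is conjugate if all four properties hold. $d_{\mu^+}(A,B):=\mu^+(A\triangle B)$. Indices range over $i,j\in\mathbb{N}$ with $i\le j$, directed by the product order $(i,j)\le(k,l)\iff i\le k$ and $j\le l$. *)

(* Defs.v *)
From HB Require Import structures.
From mathcomp Require Import all_boot all_order all_algebra.
From mathcomp Require Import boolp classical_sets functions reals numfun.
Set Implicit Arguments. Unset Strict Implicit. Unset Printing Implicit Defensive.
Import Order.TTheory GRing.Theory Num.Theory.
Local Open Scope classical_set_scope.
Local Open Scope ring_scope.

Definition is_field (X : Type) (F : set (set X)) : Prop :=
  F set0 /\ (forall A, F A -> F (~` A)) /\ (forall A B, F A -> F B -> F (A `|` B)).

Section Defs.
Context {R : realType} {X : Type}.

Definition subadditive (F : set (set X)) (mup : set X -> R) : Prop :=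
  forall A B C, F A -> F B -> F C ->
    (forall x, (\1_A x : R) <= (\1_B x : R) + (\1_C x : R)) -> mup A <= mup B + mup C.

Definition superadditive (F : set (set X)) (mum : set X -> R) : Prop :=
  forall A B C, F A -> F B -> F C ->
    (forall x, (\1_A x : R) >= (\1_B x : R) + (\1_C x : R)) -> mum A >= mum B + mum C.

Definition co_subadditive (F : set (set X)) (mum mup : set X -> R) : Prop :=
  forall A B C, F A -> F B -> F C ->
    (forall x, (\1_A x : R) <= (\1_B x : R) + (\1_C x : R)) -> mum A <= mum B + mup C.

Definition co_superadditive (F : set (set X)) (mup mum : set X -> R) : Prop :=
  forall A B C, F A -> F B -> F C ->
    (forall x, (\1_A x : R) >= (\1_B x : R) + (\1_C x : R)) -> mup A >= mup B + mum C.

Definition conjugate (F : set (set X)) (mup mum : set X -> R) : Prop :=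
  [/\ subadditive F mup, superadditive F mum,
      co_subadditive F mum mup & co_superadditive F mup mum].

Definition symdiff (A B : set X) : set X := (A `\` B) `|` (B `\` A).

Definition dmu (mup : set X -> R) (A B : set X) : R := mup (symdiff A B).

Definition complete_in (E : set (set X)) (d : set X -> set X -> R) : Prop :=
  forall A : nat -> set X, (forall n, E (A n)) ->
    (forall e : R, 0 < e -> exists N, forall m n, (N <= m)%N -> (N <= n)%N ->
        d (A m) (A n) < e) ->
    exists2 B, E B & forall e : R, 0 < e -> exists N, forall n, (N <= n)%N ->
        d (A n) B < e.

Definition blockcap (A : nat -> set X) (i j : nat) : set X :=
  \bigcap_(k in [set k | (i <= k <= j)%N]) A k.

End Defs.

(* convergence of a real net indexed by {(i,j) : i <= j} with the product order *)
Definition net_cvg {R : realType} (u : nat -> nat -> R) (L : R) : Prop :=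
  forall e : R, 0 < e -> exists i0 j0, (i0 <= j0)%N /\
    forall i j, (i <= j)%N -> (i0 <= i)%N -> (j0 <= j)%N -> `|u i j - L| < e.

(* Main.v *)
Require Import Defs.
From HB Require Import structures.
From mathcomp Require Import all_boot all_order all_algebra.
From mathcomp Require Import boolp classical_sets functions reals numfun.
Import Order.TTheory GRing.Theory Num.Theory.
Local Open Scope classical_set_scope.
Local Open Scope ring_scope.

From mathcomp Require Import lra zify.
Lemma ind_sub (R : realType) (X : Type) (A B C : set X) :
  A `<=` B `|` C -> forall x, (\1_A x : R) <= \1_B x + \1_C x.
Proof.
move=> h x; rewrite !indicE.
case: (pselect (A x)) => xA; last by rewrite (memNset xA) addr_ge0.
rewrite (mem_set xA); case: (h x xA) => [xB|xC].
  by rewrite (mem_set xB) lerDl.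
by rewrite (mem_set xC) lerDr.
Qed.

Lemma ind_sup (R : realType) (X : Type) (A B C : set X) :
  (forall x, B x -> C x -> False) -> B `|` C `<=` A ->
  forall x, (\1_B x : R) + \1_C x <= \1_A x.
Proof.
move=> hd h x; rewrite !indicE.
case: (pselect (B x)) => xB.
  rewrite (mem_set xB) (mem_set (h x (or_introl xB))).
  have xC : ~ C x by move=> xC; exact: hd x xB xC.
  by rewrite (memNset xC) addr0.
rewrite (memNset xB) add0r.
case: (pselect (C x)) => xC; last by rewrite (memNset xC).
by rewrite (mem_set xC) (mem_set (h x (or_intror xC))).
Qed.
Section Conj.
Context {R : realType} {X : Type} (F : set (set X)) (mup mum : set X -> R).
Hypothesis hF : is_field F.
Hypothesis hp0 : mup set0 = 0.
Hypothesis hm0 : mum set0 = 0.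
Hypothesis hcon : conjugate F mup mum.

Lemma F0 : F set0. Proof. by case: hF. Qed.
Lemma FC A : F A -> F (~` A). Proof. by case: hF => _ [+ _]; apply. Qed.
Lemma FU A B : F A -> F B -> F (A `|` B). Proof. by case: hF => _ [_ +]; apply. Qed.
Lemma FT : F setT. Proof. rewrite -setC0. apply: FC. exact: F0. Qed.
Lemma FI A B : F A -> F B -> F (A `&` B).
Proof. by move=> hA hB; rewrite -[A `&` B]setCK setCI; apply/FC/FU; apply: FC. Qed.
Lemma FD A B : F A -> F B -> F (A `\` B).
Proof. by move=> hA hB; rewrite setDE; apply: FI => //; apply: FC. Qed.
Lemma Fsym A B : F A -> F B -> F (symdiff A B).
Proof. by move=> hA hB; apply: FU; apply: FD. Qed.

Lemma blockcap_lt (A : nat -> set X) i j : (j < i)%N -> blockcap A i j = setT.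
Proof.
move=> h; rewrite /blockcap; apply/seteqP; split => x // _ k /= /andP[h1 h2].
by move: (leq_trans h1 h2); rewrite leqNgt h.
Qed.

Lemma blockcap_ii (A : nat -> set X) i : blockcap A i i = A i.
Proof.
rewrite /blockcap; apply/seteqP; split => x /=.
  by move=> h; apply: h; rewrite /= leqnn.
by move=> h k /= hk; rewrite -(_ : i = k) //; apply/eqP; rewrite eqn_leq.
Qed.

Lemma blockcapS (A : nat -> set X) i j : (i <= j.+1)%N ->
  blockcap A i j.+1 = blockcap A i j `&` A j.+1.
Proof.
move=> hij; rewrite /blockcap; apply/seteqP; split => x /=.
  move=> h; split; last by apply: h; rewrite /= hij leqnn.
  by move=> k /= /andP[h1 h2]; apply: h; rewrite /= h1 (leq_trans h2).
move=> [h1 h2] k /= /andP[k1 k2]; rewrite leq_eqVlt in k2.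
case/orP: k2 => [/eqP->//|k2]; apply: h1; by rewrite /= k1 -ltnS.
Qed.

Lemma Fblockcap (A : nat -> set X) i j : (forall n, F (A n)) -> F (blockcap A i j).
Proof.
move=> hA; elim: j => [|j IH].
  case: i => [|i]; first by rewrite blockcap_ii.
  by rewrite blockcap_lt //; exact: FT.
case: (leqP i j.+1) => h; last by rewrite blockcap_lt //; exact: FT.
by rewrite blockcapS //; apply: FI.
Qed.

Lemma blockcap_sub (A : nat -> set X) i j k : (i <= k <= j)%N -> blockcap A i j `<=` A k.
Proof. by move=> h x; apply. Qed.

Lemma blockcap_mono (A : nat -> set X) i j k l : (k <= i)%N -> (j <= l)%N ->
  blockcap A k l `<=` blockcap A i j.
Proof.
move=> h1 h2 x hx m /= /andP[m1 m2]; apply: hx; by rewrite /= (leq_trans h1 m1) (leq_trans m2 h2).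
Qed.

Lemma mup_sub A B C : F A -> F B -> F C -> A `<=` B `|` C -> mup A <= mup B + mup C.
Proof. case: hcon => h _ _ _ *; apply: h => //; exact: ind_sub. Qed.

Lemma mum_cosub A B C : F A -> F B -> F C -> A `<=` B `|` C -> mum A <= mum B + mup C.
Proof. case: hcon => _ _ h _ *; apply: h => //; exact: ind_sub. Qed.

Lemma mup_mono A B : F A -> F B -> A `<=` B -> mup A <= mup B.
Proof.
move=> hA hB h; have := @mup_sub A B set0 hA hB F0.
by rewrite hp0 addr0 setU0; apply.
Qed.

Lemma mum_mono A B : F A -> F B -> A `<=` B -> mum A <= mum B.
Proof.
move=> hA hB h; have := @mum_cosub A B set0 hA hB F0.
by rewrite hp0 addr0 setU0; apply.
Qed.

Lemma mum_le_mup A : F A -> mum A <= mup A.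
Proof.
move=> hA; have := @mum_cosub A set0 A hA F0 hA.
by rewrite hm0 add0r set0U; apply.
Qed.

Lemma mup_diff C D : F C -> F D -> D `<=` C -> mup (C `\` D) <= mup C - mum D.
Proof.
move=> hC hD h; rewrite lerBrDr; case: hcon => _ _ _ hs; apply: hs => //.
  exact: FD.
apply: ind_sup; first by move=> x [].
by move=> x [[]|/h].
Qed.

Lemma d_sym A B : dmu mup A B = dmu mup B A.
Proof. by rewrite /dmu /symdiff setUC. Qed.

Lemma d_tri A B C : F A -> F B -> F C -> dmu mup A C <= dmu mup A B + dmu mup B C.
Proof.
move=> hA hB hC; apply: mup_sub; try apply: Fsym => //.
move=> x [[xA xC]|[xC xA]]; case: (pselect (B x)) => xB.
all: by [left; left | left; right | right; left | right; right].
Qed.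

Lemma d_ge0 A B : (forall A, F A -> 0 <= mup A <= 1) -> F A -> F B -> 0 <= dmu mup A B.
Proof. by move=> hb hA hB; case/andP: (hb _ (@Fsym A B hA hB)). Qed.

Lemma mup_lip A B : F A -> F B -> mup A <= mup B + dmu mup A B.
Proof.
move=> hA hB; apply: mup_sub => //; first exact: Fsym.
move=> x xA; case: (pselect (B x)) => xB; [by left | by right; left].
Qed.

Lemma mum_lip A B : F A -> F B -> mum A <= mum B + dmu mup A B.
Proof.
move=> hA hB; apply: mum_cosub => //; first exact: Fsym.
move=> x xA; case: (pselect (B x)) => xB; [by left | by right; left].
Qed.

Lemma d_diff C D : F C -> F D -> D `<=` C -> dmu mup C D = mup (C `\` D).
Proof.
move=> hC hD h; rewrite /dmu /symdiff; congr mup; apply/seteqP; split => x.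
  by move=> [//|[/h]].
by move=> ?; left.
Qed.

Lemma close_eq (x y : R) : (forall e, 0 < e -> `|x - y| < e) -> x = y.
Proof.
move=> h; case: (eqVneq (x - y) 0) => [/eqP|hne]; first by rewrite subr_eq0 => /eqP.
have hp : 0 < `|x - y| by rewrite normr_gt0.
by move: (h _ hp); rewrite ltxx.
Qed.

Arguments mup_diff {C D}. Arguments d_tri {A B C}. Arguments mup_lip {A B}.
Arguments mum_lip {A B}. Arguments d_diff {C D}. Arguments mup_sub {A B C}.
Arguments mum_cosub {A B C}. Arguments mup_mono {A B}. Arguments mum_mono {A B}.
Arguments Fsym {A B}. Arguments FI {A B}. Arguments FD {A B}. Arguments FU {A B}.
Variable E : set (set X).
Hypothesis hE : E `<=` F.
Hypothesis hEq : forall A, E A -> mup A = mum A.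
Hypothesis hb : forall A, F A -> 0 <= mup A <= 1.

Lemma fwd : complete_in E (dmu mup) ->
   forall A : nat -> set X, (forall n, E (A n)) ->
     forall L : R,
       net_cvg (fun i j => mup (blockcap A i j)) L ->
       net_cvg (fun i j => mum (blockcap A i j)) L ->
       exists2 B, E B /\ mup B = L &
         net_cvg (fun i j => dmu mup (blockcap A i j) B) 0.
Proof.
move=> hc A hA L hp hm.
have FA n : F (A n) by apply: hE.
have FCb i j : F (blockcap A i j) by apply: Fblockcap.
have key : forall e, 0 < e -> exists m0, (forall i k j, (m0 <= i)%N -> (i <= k <= j)%N ->
    dmu mup (A k) (blockcap A i j) < e + e) /\ (forall k, (m0 <= k)%N -> `|mup (A k) - L| < e).
  move=> e e0; have [i1 [j1 [_ h1]]] := hp e e0; have [i2 [j2 [_ h2]]] := hm e e0.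
  have k2 : forall k, (maxn (maxn i1 j1) (maxn i2 j2) <= k)%N -> `|mup (A k) - L| < e.
    move=> k hk; have := h1 k k (leqnn k) ltac:(lia) ltac:(lia).
    by rewrite blockcap_ii.
  exists (maxn (maxn i1 j1) (maxn i2 j2)); split => // i k j hi /andP[hik hkj].
  have e1 := k2 k ltac:(lia).
  have e2 : `|mum (blockcap A i j) - L| < e := h2 i j ltac:(lia) ltac:(lia) ltac:(lia).
  have hsub : blockcap A i j `<=` A k by apply: blockcap_sub; rewrite hik hkj.
  rewrite d_diff //.
  have hd := mup_diff (FA k) (FCb i j) hsub.
  move/ltr_normlP: e1 => [e1a e1b]; move/ltr_normlP: e2 => [e2a e2b]; lra.
have hcau : forall e : R, 0 < e -> exists N, forall m n, (N <= m)%N -> (N <= n)%N ->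
        dmu mup (A m) (A n) < e.
  move=> e e0; have [m0 [h _]] := key (e / 4%:R) ltac:(lra).
  exists m0 => m n hm1 hn1.
  apply: le_lt_trans (d_tri (FA m) (FCb (minn m n) (maxn m n)) (FA n)) _.
  rewrite (d_sym (blockcap A _ _)).
  have := h (minn m n) m (maxn m n) ltac:(lia) ltac:(apply/andP; split; lia).
  have := h (minn m n) n (maxn m n) ltac:(lia) ltac:(apply/andP; split; lia).
  lra.
have [B hB hconv] := hc A hA hcau.
have FB := hE _ hB.
have hBL : mup B = L.
  apply: close_eq => e e0.
  have [m0 [_ h]] := key (e / 2%:R) ltac:(lra).
  have [N hN] := hconv (e / 2%:R) ltac:(lra).
  have := h (maxn m0 N) ltac:(lia); have := hN (maxn m0 N) ltac:(lia).
  have := mup_lip FB (FA (maxn m0 N)); have := mup_lip (FA (maxn m0 N)) FB.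
  rewrite d_sym => l1 l2 l3 /ltr_normlP [l4 l5].
  rewrite ltr_norml; apply/andP; split; lra.
exists B => //.
move=> e e0; have [m0 [h _]] := key (e / 3%:R) ltac:(lra).
have [N hN] := hconv (e / 3%:R) ltac:(lra).
exists (maxn m0 N), (maxn m0 N); split => // i j hij hi hj.
rewrite subr0 ger0_norm; last exact: d_ge0.
apply: le_lt_trans (d_tri (FCb i j) (FA i) FB) _.
rewrite d_sym.
have := h i i j ltac:(lia) ltac:(apply/andP; split; lia).
have := hN i ltac:(lia).
lra.
Qed.

Lemma bwd : (forall A : nat -> set X, (forall n, E (A n)) ->
     forall L : R,
       net_cvg (fun i j => mup (blockcap A i j)) L ->
       net_cvg (fun i j => mum (blockcap A i j)) L ->
       exists2 B, E B /\ mup B = L &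
         net_cvg (fun i j => dmu mup (blockcap A i j) B) 0) ->
  complete_in E (dmu mup).
Proof.
move=> H A hA hcau.
have FA n : F (A n) by apply: hE.
pose t k : R := (k.+1%:R)^-1.
have t_gt0 k : 0 < t k by rewrite invr_gt0 ltr0Sn.
have t_decr i j : (i <= j)%N -> t j <= t i.
  by move=> h; rewrite lef_pV2 ?posrE ?ltr0Sn // ler_nat.
have t_lt k : t k.+1 < t k by rewrite ltf_pV2 ?posrE ?ltr0Sn // ltr_nat.
have t_small e : 0 < e -> exists k, t k < e.
  move=> e0; exists (Num.Def.archi_bound (e^-1)).
  have hie : 0 < e^-1 by rewrite invr_gt0.
  have h1 := archi_boundP (ltW hie).
  rewrite /t -[e in _ < e]invrK ltf_pV2 ?posrE ?invr_gt0 ?ltr0Sn //.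
  apply: lt_le_trans h1 _; by rewrite ler_nat.
pose ee k := t k - t k.+1.
have ee_gt0 k : 0 < ee k by rewrite subr_gt0.
have [N hN] := choice (fun k => hcau (ee k) (ee_gt0 k)).
pose phi := fix phi k := if k is k'.+1 then maxn (phi k') (N k'.+1) else N 0.
have phiN k : (N k <= phi k)%N by case: k => //= k; rewrite leq_maxr.
have phiS k : (phi k <= phi k.+1)%N by rewrite /= leq_maxl.
pose A' k := A (phi k).
have FA' k : F (A' k) by apply: FA.
pose C := blockcap A'.
have FCb i j : F (C i j) by apply: Fblockcap.
have step k : dmu mup (A' k) (A' k.+1) < ee k.
  by apply: hN => //; apply: leq_trans (phiS k).
have claim1 i k : mup (A' i `\` C i (i + k)%N) <= t i - t (i + k)%N.
  elim: k => [|k IH].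
    by rewrite addn0 /C blockcap_ii setDv hp0 subrr.
  have hs : A' i `\` C i (i + k.+1)%N `<=` (A' i `\` C i (i + k)%N) `|` (A' (i + k)%N `\` A' (i + k)%N.+1).
    rewrite addnS /C blockcapS; last by lia.
    move=> x [xA hx]; case: (pselect (blockcap A' i (i + k)%N x)) => xC; last by left.
    right; split; first by apply: (@blockcap_sub A' i (i+k)%N (i+k)%N _ x xC); rewrite leq_addr leqnn.
    by move=> xA1; apply: hx.
  have h1 := mup_sub (FD (FA' i) (FCb i (i + k.+1)%N)) (FD (FA' i) (FCb i (i + k)%N)) (FD (FA' (i+k)%N) (FA' (i + k).+1)) hs.
  have h2 : mup (A' (i + k)%N `\` A' (i + k)%N.+1) <= dmu mup (A' (i + k)%N) (A' (i + k)%N.+1).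
    apply: mup_mono; [exact: FD|exact: Fsym|by move=> x hx; left].
  have := step (i + k)%N; rewrite /ee !addnS in h1 *; lra.
have claim1' i j : (i <= j)%N -> mup (A' i `\` C i j) <= t i.
  move=> hij; have := claim1 i (j - i)%N; rewrite subnKC //.
  have := t_gt0 j; lra.
have claim2 i k : dmu mup (A' i) (A' (i + k)%N) <= t i - t (i + k)%N.
  elim: k => [|k IH].
    rewrite addn0 subrr /dmu /symdiff setDv setU0 hp0 //.
  apply: le_trans (d_tri (FA' i) (FA' (i + k)%N) (FA' (i + k.+1)%N)) _.
  have := step (i + k)%N; rewrite addnS /ee; lra.
pose a k := mup (A' k).
have a_close i j : (i <= j)%N -> `|a i - a j| <= t i - t j.
  move=> hij; have := claim2 i (j - i)%N; rewrite subnKC //.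
  have := mup_lip (FA' i) (FA' j); have := mup_lip (FA' j) (FA' i).
  rewrite (d_sym (A' j)) /a => l1 l2 l3.
  rewrite ler_norml; apply/andP; split; lra.
pose S := range (fun k => a k - t k).
have ubS k : ubound S (a k + t k).
  move=> _ [l _ <-].
  case: (leqP l k) => hlk.
    have := a_close l k hlk; rewrite ler_norml => /andP[l1 l2]; have := t_gt0 k; lra.
  have := a_close k l (ltnW hlk); rewrite ler_norml => /andP[l1 l2]; have := t_gt0 l; lra.
pose L := sup S.
have S0 : S !=set0 by exists (a 0 - t 0); exists 0%N.
have hL k : `|a k - L| <= t k.
  have h1 : a k - t k <= L.
    apply: sup_upper_bound; last by exists k.
    by split => //; exists (a 0 + t 0); apply: ubS.
  have h2 : L <= a k + t k by apply: ge_sup.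
  rewrite ler_norml; apply/andP; split; lra.
have netp : forall i j, (i <= j)%N -> `|mup (C i j) - L| <= t i + t i.
  move=> i j hij.
  have hsub : C i j `<=` A' i by apply: blockcap_sub; rewrite leqnn hij.
  have l1 := mup_mono (FCb i j) (FA' i) hsub.
  have l2 : a i <= mup (C i j) + mup (A' i `\` C i j).
    apply: mup_sub => //; [exact: FD| move=> x hx].
    by case: (pselect (C i j x)) => hc; [left|right].
  have l3 := claim1' i j hij.
  have := hL i; rewrite /a in l2 * => /ler_normlP [l4 l5].
  rewrite ler_norml; apply/andP; split; lra.
have netm : forall i j, (i <= j)%N -> `|mum (C i j) - L| <= t i + t i.
  move=> i j hij.
  have hsub : C i j `<=` A' i by apply: blockcap_sub; rewrite leqnn hij.
  have l1 := mum_mono (FCb i j) (FA' i) hsub.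
  have l2 : mum (A' i) <= mum (C i j) + mup (A' i `\` C i j).
    apply: mum_cosub => //; [exact: FD| move=> x hx].
    by case: (pselect (C i j x)) => hc; [left|right].
  have l3 := claim1' i j hij.
  rewrite -(hEq _ (hA (phi i))) in l1 l2.
  have := hL i; rewrite /a => /ler_normlP [l4 l5].
  rewrite ler_norml; apply/andP; split; lra.
have cvgnet : forall u : nat -> nat -> R, (forall i j, (i <= j)%N -> `|u i j - L| <= t i + t i) ->
    net_cvg u L.
  move=> u hu e e0; have [k hk] := t_small (e / 3%:R) ltac:(lra).
  exists k, k; split => // i j hij hi _.
  have := hu i j hij; have := t_decr k i hi; lra.
have [B [hB hBL] hconv] := H A' (fun n => hA _) L (cvgnet _ netp) (cvgnet _ netm).
have FB := hE _ hB.
exists B => // e e0.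
have [k hk] := t_small (e / 3%:R) ltac:(lra).
have [i0 [j0 [_ hc]]] := hconv (e / 3%:R) ltac:(lra).
pose i := maxn k i0; pose j := maxn i j0.
exists (N i) => n hn.
apply: le_lt_trans (d_tri (FA n) (FA' i) FB) _.
have l1 : dmu mup (A n) (A' i) < ee i by apply: hN.
have l2 := d_tri (FA' i) (FCb i j) FB.
have hsub : C i j `<=` A' i by apply: blockcap_sub; rewrite leqnn leq_maxl.
have l3 : dmu mup (A' i) (C i j) <= t i by rewrite d_diff //; apply: claim1'; rewrite leq_maxl.
have l4 := hc i j (leq_maxl _ _) (leq_maxr _ _) (leq_maxr _ _).
rewrite subr0 ger0_norm in l4; last exact: d_ge0.
have l5 := t_decr k i (leq_maxl _ _).
have l6 := t_gt0 i.+1.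
rewrite /ee in l1; lra.
Qed.

End Conj.
Theorem mainTheorem4 (R : realType) (X : Type) (F E : set (set X))
    (mup mum : set X -> R) :
  is_field F -> E `<=` F ->
  mup set0 = 0 -> mum set0 = 0 -> mup setT = 1 -> mum setT = 1 ->
  (forall A, F A -> 0 <= mup A <= 1) -> (forall A, F A -> 0 <= mum A <= 1) ->
  conjugate F mup mum ->
  (forall A, E A -> mup A = mum A) ->
  (complete_in E (dmu mup) <->
   forall A : nat -> set X, (forall n, E (A n)) ->
     forall L : R,
       net_cvg (fun i j => mup (blockcap A i j)) L ->
       net_cvg (fun i j => mum (blockcap A i j)) L ->
       exists2 B, E B /\ mup B = L &
         net_cvg (fun i j => dmu mup (blockcap A i j) B) 0).
Proof.
move=> hF hEF hp0 hm0 _ _ hb _ hcon hEq; split.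
  exact: (@fwd R X F mup mum hF hcon E hEF hb).
exact: (@bwd R X F mup mum hF hp0 hcon E hEF hEq hb).
Qed.
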